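(* Let $\mathcal{X}\subset\mathbb{R}^d$ and let $\mathbb{P},\mathbb{Q},\mu$ be probability distributions on $\mathcal{X}$ with densities (denoted by the same letters), where $\mu(x)>0$ for all $x\in\mathcal{X}$. Let $\mathcal{L}_2(\mathcal{X},\mu)$ be the space of measurable $f:\mathcal{X}\to\mathbb{R}$ with $\|f\|_{\mathcal{L}_2(\mathcal{X},\mu)}=\sqrt{\int_{\mathcal{X}} f^2(x)\mu(x)\,dx}<\infty$, and define the generalized Fisher IPM $$\mathcal{F}_\mu(\mathbb{P},\mathbb{Q})=\sup_{f\in\mathcal{L}_2(\mathcal{X},\mu),\ \|f\|_{\mathcal{L}_2(\mathcal{X},\mu)}\le 1}\Big(\mathbb{E}_{x\sim\mathbb{P}}f(x)-\mathbb{E}_{x\sim\mathbb{Q}}f(x)\Big).$$ Then: (1) $\mathcal{F}_\mu(\mathbb{P},\mathbb{Q})=\Big\|\frac{\mathbb{P}-\mathbb{Q}}{\mu}\Big\|_{\mathcal{L}_2(\mathcal{X},\mu)}=\sqrt{\mathbb{E}_{x\sim\mu}\Big(\frac{\mathbb{P}(x)-\mathbb{Q}(x)}{\mu(x)}\Big)^2}$; (2) when this quantity is finite and nonzero, the supremum is attained by the critic $f_\chi=\frac{1}{\mathcal{F}_\mu(\mathbb{P},\mathbb{Q})}\,\frac{\mathbb{P}-\mathbb{Q}}{\mu}$, $\mu$-almost surely.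
   Context: $\mu$ is a dominant measure for $\mathbb{P}$ and $\mathbb{Q}$: $\mu(x)=0$ implies $\mathbb{P}(x)=\mathbb{Q}(x)=0$ (automatic here since $\mu>0$ everywhere). *)

(* Defs.v *)
From HB Require Import structures.
From mathcomp Require Import all_boot all_order all_algebra.
From mathcomp Require Import all_classical all_reals all_analysis.
Set Implicit Arguments. Unset Strict Implicit. Unset Printing Implicit Defensive.
Import Order.TTheory GRing.Theory Num.Theory.
Local Open Scope classical_set_scope.
Local Open Scope ring_scope.
Local Open Scope ereal_scope.

Section Fisher.
Context {dT : measure_display} {T : measurableType dT} {R : realType}.
Variables (lam : {measure set T -> \bar R}) (X : set T).

(* g is a probability density on X w.r.t. the base measure lam ("dx") *)
Definition is_density (g : T -> R) : Prop :=
  measurable_fun X g /\ (forall x, X x -> (0 <= g x)%R) /\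
  \int[lam]_(x in X) (g x)%:E = 1.

Definition L2norm (mu : T -> R) (f : T -> R) : \bar R :=
  sqrte (\int[lam]_(x in X) ((f x ^+ 2 * mu x)%R)%:E).

Definition inL2 (mu : T -> R) (f : T -> R) : Prop :=
  measurable_fun X f /\ L2norm mu f < +oo.

(* E_{x~P} f(x) - E_{x~Q} f(x), written as \int_X f(x) (P(x) - Q(x)) dx *)
Definition mean_diff (p q : T -> R) (f : T -> R) : \bar R :=
  \int[lam]_(x in X) ((f x * (p x - q x))%R)%:E.

Definition fisher_ipm (mu p q : T -> R) : \bar R :=
  ereal_sup [set mean_diff p q f | f in
               [set f | inL2 mu f /\ L2norm mu f <= 1]].

(* a property holds mu-almost surely on X, mu being the density of the
   measure mu(x)dx: it holds outside a measurable set of mu-measure 0 *)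
Definition mu_ae (mu : T -> R) (P : T -> Prop) : Prop :=
  exists N : set T, measurable N /\ N `<=` X /\
    \int[lam]_(x in N) (mu x)%:E = 0 /\ (forall x, X x -> ~ N x -> P x).

End Fisher.

(* Main.v *)
Require Import Defs.
Set Warnings "-all".
From HB Require Import structures.
From mathcomp Require Import all_boot all_order all_algebra.
From mathcomp Require Import all_classical all_reals all_analysis.
From mathcomp Require Import measurable_realfun.
From mathcomp Require Import ring lra.
Import Order.TTheory GRing.Theory Num.Theory.
Local Open Scope classical_set_scope.
Local Open Scope ring_scope.

Lemma amgm_real (R : realFieldType) (a b t : R) : 0 < t ->
  a * b <= t / 2 * a ^+ 2 + (2 * t)^-1 * b ^+ 2.
Proof.
move=> t0.
have u0 : 0 < t^-1 by rewrite invr_gt0.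
have tu : t * t^-1 = 1 by rewrite mulfV // gt_eqF.
have -> : (2 * t)^-1 = 2^-1 * t^-1 by rewrite invfM.
have h := mulr_ge0 (ltW u0) (sqr_ge0 (t * a - b)).
have e : t^-1 * (t * a - b) ^+ 2 = t * a ^+ 2 - 2 * a * b + t^-1 * b ^+ 2.
  by field; rewrite gt_eqF.
lra.
Qed.

Section Fisher.
Context {dT : measure_display} {T : measurableType dT} {R : realType}.
Variables (lam : {measure set T -> \bar R}) (X : set T).
Hypothesis mX : measurable X.
Variable mu : T -> R.
Hypothesis mmu : measurable_fun X mu.
Hypothesis mu_pos : forall x, X x -> 0 < mu x.

Definition E2 (f : T -> R) := (\int[lam]_(x in X) ((f x ^+ 2 * mu x)%:E))%E.

Lemma E2_ge0 (f : T -> R) : (0 <= E2 f)%E.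
Proof. by apply: integral_ge0 => x Xx; rewrite lee_fin mulr_ge0 ?sqr_ge0 ?ltW ?mu_pos. Qed.

Lemma mE2 (f : T -> R) : measurable_fun X f ->
  measurable_fun X (fun x => ((f x ^+ 2 * mu x)%:E)).
Proof.
move=> mf; apply/measurable_EFinP.
exact: measurable_funM (measurable_funX _ mf) mmu.
Qed.

Lemma amgm {f g : T -> R} {t : R} : measurable_fun X f -> measurable_fun X g -> 0 < t ->
  (\int[lam]_(x in X) `|(f x * g x * mu x)%:E| <=
    (t / 2)%:E * E2 f + ((2 * t)^-1)%:E * E2 g)%E.
Proof.
move=> mf mg t0.
have h1 : (0 <= t / 2) by rewrite divr_ge0 // ltW.
have h2 : (0 <= (2 * t)^-1) by rewrite invr_ge0 mulr_ge0 // ltW.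
rewrite /E2 -(ge0_integralZl_EFin _ _ _ (mE2 _ mf) h1) //; last first.
  by move=> x Xx; rewrite lee_fin mulr_ge0 ?sqr_ge0 ?ltW ?mu_pos.
rewrite -(ge0_integralZl_EFin _ _ _ (mE2 _ mg) h2) //; last first.
  by move=> x Xx; rewrite lee_fin mulr_ge0 ?sqr_ge0 ?ltW ?mu_pos.
under [X in (_ <= X + _)%E]eq_integral => x _ do rewrite -EFinM.
under [X in (_ <= _ + X)%E]eq_integral => x _ do rewrite -EFinM.
rewrite -ge0_integralD //; try (by move=> x Xx; rewrite lee_fin; apply: mulr_ge0 => //; rewrite mulr_ge0 ?sqr_ge0 ?ltW ?mu_pos);
  try (by apply/measurable_EFinP; apply: measurableT_comp => //; apply/measurable_EFinP; exact: mE2).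
apply: ge0_le_integral => //.
- apply: measurableT_comp => //; apply/measurable_EFinP.
  by apply: measurable_funM => //; apply: measurable_funM.
- apply: emeasurable_funD.
  + by apply/measurable_EFinP; apply: measurable_funM => //; apply/measurable_EFinP; exact: mE2.
  + by apply/measurable_EFinP; apply: measurable_funM => //; apply/measurable_EFinP; exact: mE2.
move=> x Xx; rewrite -EFinD /= lee_fin.
have m0 := mu_pos x Xx.
rewrite !normrM (gtr0_norm m0) !mulrA -mulrDl ler_pM2r //.
have := @amgm_real R `|f x| `|g x| t t0.
by rewrite !real_normK ?num_real // !expr2 !mulrA.
Qed.

Lemma mprod {f g : T -> R} : measurable_fun X f -> measurable_fun X g ->
  measurable_fun X (fun x => (f x * g x * mu x)%:E).
Proof.
move=> mf mg; apply/measurable_EFinP.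
by apply: measurable_funM => //; apply: measurable_funM.
Qed.

Lemma ub_int (f r : T -> R) : measurable_fun X f -> measurable_fun X r ->
  (E2 f <= 1)%E ->
  (\int[lam]_(x in X) (f x * r x * mu x)%:E <= sqrte (E2 r))%E.
Proof.
move=> mf mr f1.
apply: le_trans (lee_abs _) _.
apply: le_trans (le_abse_integral lam mX (mprod mf mr)) _.
have f0 := E2_ge0 f.
have := E2_ge0 r; case E: (E2 r) => [i| |] // i0; last by rewrite leey.
rewrite lee_fin in i0.
have [i00|ipos] := eqVneq i 0.
  rewrite i00 /= sqrtr0; apply/lee_addgt0Pr => e e0; rewrite add0e.
  have e2 : 0 < 2 * e by rewrite mulr_gt0.
  apply: le_trans (amgm mf mr e2) _.
  rewrite E i00 mule0 adde0.
  have -> : (2 * e / 2) = e by field.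
  rewrite -[X in (_ <= X)%E]mule1; apply: lee_wpmul2l => //.
  by rewrite lee_fin ltW.
have ip : 0 < i by rewrite lt_def ipos.
have sp : 0 < Num.sqrt i by rewrite sqrtr_gt0.
apply: le_trans (amgm mf mr sp) _.
rewrite E /=.
apply: le_trans (leeD2r _ (lee_wpmul2l _ f1)) _.
  by rewrite lee_fin divr_ge0 // ltW.
rewrite mule1 -EFinM -EFinD lee_fin.
have si := sqr_sqrtr (ltW ip).
set s := Num.sqrt i in sp si *.
rewrite -si le_eqVlt; apply/orP; left; apply/eqP.
by field; rewrite gt_eqF.
Qed.

Hypothesis int_mu : (\int[lam]_(x in X) (mu x)%:E = 1)%E.
Variable r : T -> R.
Hypothesis mr : measurable_fun X r.

Definition rn (n : nat) x := if `|r x| <= n%:R then r x else 0.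

Lemma mrn n : measurable_fun X (rn n).
Proof.
apply: measurable_fun_if => //.
- apply: measurable_fun_ler => //.
  exact: measurableT_comp.
- apply: measurable_funS mr => //; exact: subIsetl.
Qed.

Lemma E2rn_fin n : (E2 (rn n) <= (n%:R ^+ 2)%:E)%E.
Proof.
rewrite -[X in (_ <= X)%E]mule1 -int_mu -ge0_integralZl_EFin //;
  try (by move=> x Xx; rewrite lee_fin ltW ?mu_pos); try exact/measurable_EFinP;
  try (by rewrite sqr_ge0).
apply: ge0_le_integral => //.
- by move=> x Xx; rewrite lee_fin mulr_ge0 ?sqr_ge0 ?ltW ?mu_pos.
- exact: mE2 (mrn n).
- by apply/measurable_EFinP; apply: measurableT_comp => //; exact/measurable_EFinP.
move=> x Xx; rewrite -EFinM lee_fin ler_pM2r; last exact: mu_pos.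
rewrite /rn; case: ifP => h; last by rewrite expr0n /= sqr_ge0.
by rewrite -(real_normK (num_real (r x))) !expr2; apply: ler_pM => //; rewrite ?ler0n ?normr_ge0.
Qed.

Lemma lb_trunc n : exists f, measurable_fun X f /\ (E2 f <= 1)%E /\
  (sqrte (E2 (rn n)) <= \int[lam]_(x in X) (f x * r x * mu x)%:E)%E.
Proof.
have := E2_ge0 (rn n); have := E2rn_fin n.
case E: (E2 (rn n)) => [c| |] //= _; rewrite lee_fin => c0.
have [c00|cpos] := eqVneq c 0.
  exists (fun _ => 0); split; first exact: measurable_cst.
  split.
    rewrite /E2 (eq_integral (fun _ => 0%E)) ?integral0 //.
    by move=> x _; rewrite expr0n /= mul0r.
  rewrite c00 sqrtr0 (eq_integral (fun _ => 0%E)) ?integral0 //.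
  by move=> x _; rewrite !mul0r.
have cp : 0 < c by rewrite lt_def cpos.
have sp : 0 < Num.sqrt c by rewrite sqrtr_gt0.
have si := sqr_sqrtr (ltW cp).
set s := Num.sqrt c in sp si *.
exists (fun x => s^-1 * rn n x); split.
  exact: measurable_funM (measurable_cst _) (mrn n).
have hs : 0 <= s^-1 by rewrite invr_ge0 ltW.
have hs2 : 0 <= s^-1 ^+ 2 by rewrite sqr_ge0.
split.
  rewrite /E2 (eq_integral (fun x => ((s^-1 ^+ 2)%:E * (rn n x ^+ 2 * mu x)%:E)%E)); last first.
    by move=> x _; rewrite -EFinM exprMn -mulrA.
  rewrite ge0_integralZl_EFin //; last first.
  - exact: mE2 (mrn n).
  - by move=> x Xx; rewrite lee_fin mulr_ge0 ?sqr_ge0 ?ltW ?mu_pos.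
  rewrite -/(E2 (rn n)) E -EFinM lee_fin -si exprVn mulVf //.
  by apply: expf_neq0; rewrite gt_eqF.
rewrite (eq_integral (fun x => ((s^-1)%:E * (rn n x ^+ 2 * mu x)%:E)%E)); last first.
  move=> x _; rewrite -EFinM /rn; case: ifP => _; first by rewrite expr2 !mulrA.
  by rewrite expr0n /= !(mulr0, mul0r).
rewrite ge0_integralZl_EFin //; last first.
- exact: mE2 (mrn n).
- by move=> x Xx; rewrite lee_fin mulr_ge0 ?sqr_ge0 ?ltW ?mu_pos.
rewrite -/(E2 (rn n)) E -EFinM lee_fin -si.
rewrite le_eqVlt; apply/orP; left; apply/eqP.
by field; rewrite gt_eqF.
Qed.

Lemma lb (S : \bar R) : (forall f, measurable_fun X f -> (E2 f <= 1)%E ->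
   (\int[lam]_(x in X) (f x * r x * mu x)%:E <= S)%E) ->
  (sqrte (E2 r) <= S)%E.
Proof.
move=> HS.
have S0 : (0 <= S)%E.
  have := HS (fun _ => 0) (measurable_cst _).
  rewrite (eq_integral (fun _ => 0%E)) ?integral0; last by move=> x _; rewrite !mul0r.
  apply; rewrite /E2 (eq_integral (fun _ => 0%E)) ?integral0 //.
  by move=> x _; rewrite expr0n /= mul0r.
have HSn n : (E2 (rn n) <= S ^+ 2)%E.
  have [f [mf [f1 h]]] := lb_trunc n.
  have := le_trans h (HS f mf f1).
  by rewrite -{1}(gee0_abs S0) -sqrte_sqr lee_sqrt ?sqre_ge0.
rewrite -(gee0_abs S0) -sqrte_sqr lee_sqrt ?sqre_ge0 //.
have mg n : measurable_fun X (fun x => ((rn n x ^+ 2 * mu x)%:E)).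
  exact: mE2 (mrn n).
have g0 n x : X x -> (0 <= (rn n x ^+ 2 * mu x)%:E)%E.
  by move=> Xx; rewrite lee_fin mulr_ge0 ?sqr_ge0 ?ltW ?mu_pos.
have gnd x : X x -> {homo (fun n => ((rn n x ^+ 2 * mu x)%:E)) : n m / (n <= m)%N >-> (n <= m)%E}.
  move=> Xx n m nm; rewrite /rn; case: ifP => h1.
    rewrite ifT //; apply: le_trans h1 _; by rewrite ler_nat.
  by case: ifP => _; rewrite ?g0 // expr0n /= mul0r lee_fin mulr_ge0 ?sqr_ge0 ?ltW ?mu_pos.
rewrite /E2 (eq_integral (fun x => limn (fun n => ((rn n x ^+ 2 * mu x)%:E)))); last first.
  move=> x; rewrite inE => Xx; apply/esym.
  apply: (lim_near_cst (@ereal_hausdorff R)).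
  exists (Num.trunc `|r x|).+1 => // m /= hm.
  rewrite /rn ifT //; apply: ltW; apply: lt_le_trans (truncnS_gt _) _.
  by rewrite ler_nat.
rewrite monotone_convergence //.
apply: lime_le.
  apply: cvgP; exact: cvg_monotone_convergence.
by apply: nearW => n; exact: HSn.
Qed.

Lemma E2_scale (c : R) (h : T -> R) : measurable_fun X h ->
  E2 (fun x => c * h x) = ((c ^+ 2)%:E * E2 h)%E.
Proof.
move=> mh; rewrite /E2 -ge0_integralZl_EFin //;
  try (by move=> x Xx; rewrite lee_fin mulr_ge0 ?sqr_ge0 ?ltW ?mu_pos);
  try (by rewrite sqr_ge0); try exact: mE2.
by apply: eq_integral => x _; rewrite -EFinM; congr (_%:E); rewrite exprMn -mulrA.
Qed.

Lemma int_E2 {h : T -> R} : measurable_fun X h -> (E2 h < +oo)%E ->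
  lam.-integrable X (EFin \o (fun x => h x ^+ 2 * mu x)).
Proof.
move=> mh hf; apply/integrableP; split; first exact: mE2.
rewrite (eq_integral (fun x => (h x ^+ 2 * mu x)%:E)) //.
move=> x; rewrite inE => Xx /=.
by rewrite ger0_norm // mulr_ge0 ?sqr_ge0 // ltW // mu_pos.
Qed.

Lemma uniq_part (f : T -> R) (i : R) : measurable_fun X f -> (E2 f <= 1)%E ->
  E2 r = i%:E -> 0 < i ->
  (\int[lam]_(x in X) (f x * r x * mu x)%:E = (Num.sqrt i)%:E)%E ->
  (\int[lam]_(x in X) `|(((f x - (Num.sqrt i)^-1 * r x) ^+ 2 * mu x)%:E)| = 0)%E.
Proof.
move=> mf f1 Ei ip Hint.
have sp : 0 < Num.sqrt i by rewrite sqrtr_gt0.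
have si := sqr_sqrtr (ltW ip).
set s := Num.sqrt i in sp si Hint *.
set g := fun x => s^-1 * r x.
have mg : measurable_fun X g by exact: measurable_funM (measurable_cst _) mr.
have Eg : E2 g = 1%E.
  rewrite /g E2_scale // Ei -EFinM -si exprVn mulVf //.
  by apply: expf_neq0; rewrite gt_eqF.
have f0 := E2_ge0 f.
have f_fin : (E2 f < +oo)%E by apply: le_lt_trans f1 _; exact: ltey.
have h3 : lam.-integrable X (fun x => (f x * r x * mu x)%:E).
  apply/integrableP; split; first exact: mprod.
  apply: le_lt_trans (amgm mf mr ltr01) _.
  rewrite Ei; apply: lte_add_pinfty.
    by apply: lte_mul_pinfty => //; rewrite lee_fin divr_ge0.
  by rewrite -EFinM ltey.
set A := fun x => f x ^+ 2 * mu x + g x ^+ 2 * mu x.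
set B := fun x => 2 * s^-1 * (f x * r x * mu x).
have hA : lam.-integrable X (EFin \o A).
  have g_fin : (E2 g < +oo)%E by rewrite Eg ltey.
  have := integrableD mX (int_E2 mf f_fin) (int_E2 mg g_fin).
  by congr (_.-integrable _ _); apply/funext => x /=; rewrite EFinD.
have hB : lam.-integrable X (EFin \o B).
  have := integrableZl mX (2 * s^-1) h3.
  by congr (_.-integrable _ _); apply/funext => x /=; rewrite /B EFinM.
apply: le_anti; apply/andP; split; last by apply: integral_ge0 => x _; exact: abse_ge0.
have -> : (\int[lam]_(x in X) `|(((f x - s^-1 * r x) ^+ 2 * mu x)%:E)| =
   \int[lam]_(x in X) ((A x)%:E - (B x)%:E))%E.
  apply: eq_integral => x; rewrite inE => Xx.
  rewrite -EFinB /= ger0_norm; last by rewrite mulr_ge0 ?sqr_ge0 // ltW // mu_pos.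
  by congr (_%:E); rewrite /A /B /g; field; rewrite gt_eqF.
rewrite (integralB_EFin mX hA hB).
rewrite (eq_integral (fun x => ((f x ^+ 2 * mu x)%:E + (g x ^+ 2 * mu x)%:E)%E)); last first.
  by move=> x _; rewrite /A EFinD.
rewrite ge0_integralD //; try exact: mE2;
  try (by move=> x Xx; rewrite lee_fin mulr_ge0 ?sqr_ge0 ?ltW ?mu_pos).
rewrite -/(E2 f) -/(E2 g) Eg.
rewrite (eq_integral (fun x => ((2 * s^-1)%:E * (f x * r x * mu x)%:E)%E)); last first.
  by move=> x _; rewrite /B EFinM.
rewrite integralZl // Hint.
move: f0 f1; case: (E2 f) => [a| |] //; rewrite !lee_fin => a0 a1.
have -> : 2 / s * s = 2 by field; rewrite gt_eqF.
lra.
Qed.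

End Fisher.

Theorem theorem1 (dT : measure_display) (T : measurableType dT) (R : realType)
  (lam : {measure set T -> \bar R}) (X : set T) (mX : measurable X)
  (P Q mu : T -> R)
  (hP : is_density lam X P) (hQ : is_density lam X Q) (hmu : is_density lam X mu)
  (mu_pos : forall x, X x -> 0 < mu x) :
  let ratio := fun x => (P x - Q x) / mu x in
  fisher_ipm lam X mu P Q = L2norm lam X mu ratio /\
  (fisher_ipm lam X mu P Q \is a fin_num ->
   fisher_ipm lam X mu P Q != 0%E ->
   let fchi := fun x => (fine (fisher_ipm lam X mu P Q))^-1 * ratio x in
   (inL2 lam X mu fchi /\ (L2norm lam X mu fchi <= 1)%E /\
    mean_diff lam X P Q fchi = fisher_ipm lam X mu P Q) /\
   (forall f, inL2 lam X mu f -> (L2norm lam X mu f <= 1)%E ->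
      mean_diff lam X P Q f = fisher_ipm lam X mu P Q ->
      mu_ae lam X mu (fun x => f x = fchi x))).
Proof.
move=> ratio.
case: hP => mP [P0 intP]; case: hQ => mQ [Q0 intQ]; case: hmu => mmu [mu0 intmu].
have minv : measurable_fun X (fun x => (mu x)^-1).
  change (measurable_fun X (GRing.inv \o mu)).
  apply: (measurable_comp (T2 := R) (T3 := R) (F := `]0, +oo[%classic) (f := GRing.inv) (g := mu)) => //.
  - by move=> _ [x Xx <-]; rewrite /= in_itv /= andbT mu_pos.
  - apply: open_continuous_measurable_fun; first exact: interval_open.
    move=> x; rewrite inE /= in_itv /= andbT => x0; apply: inv_continuous.
    by rewrite gt_eqF.
have mr : measurable_fun X ratio.
  exact: measurable_funM (measurable_funB mP mQ) minv.
have md f : mean_diff lam X P Q f = (\int[lam]_(x in X) (f x * ratio x * mu x)%:E)%E.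
  apply: eq_integral => x; rewrite inE => Xx; congr (_%:E).
  by rewrite /ratio -mulrA divfK // gt_eqF // mu_pos.
have L2E f : L2norm lam X mu f = sqrte (E2 lam X mu f) by [].
have sq1 : sqrte (1 : \bar R) = 1%E by rewrite /= sqrtr1.
have normle f : (L2norm lam X mu f <= 1)%E <-> (E2 lam X mu f <= 1)%E.
  by rewrite L2E -{1}sq1 lee_sqrt.
have Hfe : fisher_ipm lam X mu P Q = L2norm lam X mu ratio.
  apply: le_anti; apply/andP; split.
  - apply: ge_ereal_sup => _ [f [[mf _] f1] <-].
    rewrite md; apply: ub_int => //; exact/normle.
  - rewrite L2E; apply: lb => // f mf f1; rewrite -md.
    apply: ereal_sup_ubound; exists f => //; split; last exact/normle.
    split => //; apply: (le_lt_trans (proj2 (normle f) f1)); exact: ltry.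
split => //.
move=> Ffin F0 fchi.
have E2r0 := E2_ge0 lam X mu mu_pos ratio.
move: Ffin F0; rewrite Hfe L2E.
case Ei : (E2 lam X mu ratio) E2r0 => [i| |] //= i0 _ i_ne0.
rewrite lee_fin in i0.
have ip : 0 < i.
  rewrite lt_def i0 andbT; apply: contraNneq i_ne0 => ->.
  by rewrite sqrtr0.
have sp : 0 < Num.sqrt i by rewrite sqrtr_gt0.
have si := sqr_sqrtr (ltW ip).
have Fs : fisher_ipm lam X mu P Q = (Num.sqrt i)%:E by rewrite Hfe L2E Ei.
have fchiE : fchi = fun x => (Num.sqrt i)^-1 * ratio x by rewrite /fchi Fs.
rewrite fchiE; clear fchiE fchi.
set s := Num.sqrt i in sp si Fs *.
have mg : measurable_fun X (fun x => s^-1 * ratio x).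
  exact: measurable_funM (measurable_cst _) mr.
have Eg : E2 lam X mu (fun x => s^-1 * ratio x) = 1%E.
  rewrite E2_scale // Ei -EFinM -si exprVn mulVf //.
  by apply: expf_neq0; rewrite gt_eqF.
split; [split; [|split] |].
- split => //; rewrite L2E Eg sq1; exact: ltry.
- by rewrite L2E Eg sq1.
- rewrite md.
  rewrite (eq_integral (fun x => ((s^-1)%:E * (ratio x ^+ 2 * mu x)%:E)%E)); last first.
    by move=> x _; rewrite -EFinM; congr (_%:E); rewrite expr2 !mulrA.
  rewrite ge0_integralZl_EFin //; try exact: mE2;
    try (by move=> x Xx; rewrite lee_fin mulr_ge0 ?sqr_ge0 ?ltW ?mu_pos);
    try (by rewrite invr_ge0 ltW).
  rewrite -/(E2 lam X mu ratio) Ei -EFinM -si.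
  by congr (_%:E); field; rewrite gt_eqF.
move=> f [mf _] f1 mdf.
have f1' : (E2 lam X mu f <= 1)%E by apply/normle.
have H0 := uniq_part lam X mX mu mmu mu_pos ratio mr f i mf f1' Ei ip (etrans (esym (md f)) mdf).
have mh : measurable_fun X (fun x => (((f x - s^-1 * ratio x) ^+ 2 * mu x)%:E)).
  exact: mE2 (measurable_funB mf mg).
have := (ae_eq_integral_abs lam mX mh).1 H0.
case=> N0 [mN0 N00 sub].
have mfe : measurable_fun X (fun x => f x == s^-1 * ratio x).
  exact: measurable_fun_eqr.
have mN : measurable (X `&` (fun x => f x == s^-1 * ratio x) @^-1` [set false]).
  exact: mfe.
exists (X `&` (fun x => f x == s^-1 * ratio x) @^-1` [set false]).
split => //; split; first exact: subIsetl.
split.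
  apply: null_set_integral => //.
    apply/measurable_EFinP; apply: measurable_funS mmu => //; exact: subIsetl.
  apply: (subset_measure0 mN mN0) => // x [Xx /= hx]; apply: sub => /= h.
  have := h Xx; move/eqP; rewrite eqe mulf_eq0 (gt_eqF (mu_pos x Xx)) orbF.
  by rewrite sqrf_eq0 subr_eq0 hx.
move=> x Xx nN; apply/eqP; apply/negPn/negP => hne; apply: nN; split => //=.
exact/negbTE.
Qed.
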